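(* Let $n\ge1$, $m\ge0$, let $z\in Z_{n,m}$ with $z_i=0$ for some $1\leq i\leq m$, and let $P=(z=x^0\sim x^1\sim\dots\sim x^d=0)$ be a geodesic in $Z_{n,m}$ between $z$ and $0$. Then, for either choice of sign, there exists a geodesic $P'=(z=y^0\sim y^1\sim\dots\sim y^d=0)$ such that (1) $y^t_i\leq0$ for all $0\leq t\leq d$ (respectively, $y^t_i\geq0$ for all $0\le t\le d$), and (2) $\{y^t_j:0\leq t\leq d\}=\{x^t_j:0\leq t\leq d\}$ for every $0\leq j\leq m+1$ with $j\neq i$.
   Context: Elements of $\mathbb{Z}_n$ are identified with representatives in $\{0,\dots,n-1\}$. The dYoke graph $Z_{n,m}$ has vertices $u=(u_0,\dots,u_{m+1})\in\mathbb{Z}_n\times\{-1,0,1\}^m\times\mathbb{Z}_n$ with $\sum_{i=0}^{m+1}u_i\equiv0\pmod n$; $u,v$ are adjacent if there is $0\leq i\leq m$ such that $u_j=v_j$ for $j\notin\{i,i+1\}$ and either ($u_i=v_i+1$, $u_{i+1}=v_{i+1}-1$) or ($u_i=v_i-1$, $u_{i+1}=v_{i+1}+1$), with arithmetic in coordinates $0,m+1$ in $\mathbb{Z}_n$. $0$ is the all-zero vertex. *)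

(* Defs.v *)
From mathcomp Require Import all_boot all_order all_algebra.
From mathcomp Require Import intdiv.
Set Implicit Arguments. Unset Strict Implicit. Unset Printing Implicit Defensive.
Import Order.TTheory GRing.Theory Num.Theory.
Local Open Scope ring_scope.

(* A vertex of Z_{n,m} is encoded as u : nat -> int, with u k the k-th
   coordinate for 0 <= k <= m+1 and u k = 0 for k > m+1 (canonical padding).
   Coordinates 0 and m+1 are elements of Z_n, represented in {0,...,n-1}. *)
Definition dyoke_vertex (n m : nat) (u : nat -> int) : Prop :=
  [/\ 0 <= u 0%N < n%:Z, 0 <= u m.+1 < n%:Z,
      (forall k : nat, (1 <= k <= m)%N -> u k \in [:: -1; 0; 1]),
      (forall k : nat, (m.+1 < k)%N -> u k = 0) &
      (n%:Z %| \sum_(0 <= k < m.+2) u k)%Z].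

Definition coord_eq (n m : nat) (k : nat) (a b : int) : bool :=
  if (k == 0%N) || (k == m.+1) then (n%:Z %| (a - b))%Z else a == b.

Definition dyoke_adj (n m : nat) (u v : nat -> int) : Prop :=
  exists i : nat, (i <= m)%N /\
    (forall j : nat, j != i -> j != i.+1 -> u j = v j) /\
    ((coord_eq n m i (u i) (v i + 1) /\ coord_eq n m i.+1 (u i.+1) (v i.+1 - 1)) \/
     (coord_eq n m i (u i) (v i - 1) /\ coord_eq n m i.+1 (u i.+1) (v i.+1 + 1))).

Definition dyoke_zero : nat -> int := fun _ => 0.

Definition dyoke_path (n m : nat) (x : nat -> nat -> int) (d : nat)
    (a b : nat -> int) : Prop :=
  [/\ x 0%N = a, x d = b,
      (forall t : nat, (t <= d)%N -> dyoke_vertex n m (x t)) &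
      (forall t : nat, (t < d)%N -> dyoke_adj n m (x t) (x t.+1))].

Definition dyoke_geodesic (n m : nat) (x : nat -> nat -> int) (d : nat)
    (a b : nat -> int) : Prop :=
  dyoke_path n m x d a b /\
  forall (x' : nat -> nat -> int) (d' : nat), dyoke_path n m x' d' a b -> (d <= d')%N.

Definition coord_values (x : nat -> nat -> int) (d j : nat) (a : int) : Prop :=
  exists2 t : nat, (t <= d)%N & x t j = a.

(* Main.v *)
Require Import Defs.
From mathcomp Require Import all_boot all_order all_algebra.
From mathcomp Require Import intdiv zify ring.
From Stdlib Require Import IndefiniteDescription FunctionalExtensionality.
Set Implicit Arguments. Unset Strict Implicit. Unset Printing Implicit Defensive.
Import Order.TTheory GRing.Theory Num.Theory.
Local Open Scope ring_scope.

Definition normc (n m j : nat) (a : int) : int :=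
  if (j == 0%N) || (j == m.+1) then (a %% n%:Z)%Z else a.
Definition eff (e : nat) (s : int) (j : nat) : int :=
  (if j == e then s else 0) - (if j == e.+1 then s else 0).
Definition raw (z : nat -> int) (e : nat -> nat) (s : nat -> int) (t j : nat) : int :=
  z j + \sum_(0 <= k < t) eff (e k) (s k) j.

Lemma rawS z e s t j : raw z e s t.+1 j = raw z e s t j + eff (e t) (s t) j.
Proof. by rewrite /raw big_nat_recr //= addrA. Qed.
Lemma raw0 z e s j : raw z e s 0 j = z j.
Proof. by rewrite /raw big_geq // addr0. Qed.

Lemma eff_out e s j : j != e -> j != e.+1 -> eff e s j = 0.
Proof. by rewrite /eff => /negbTE-> /negbTE->; rewrite subr0. Qed.
Lemma eff_e e s : eff e s e = s.
Proof. by rewrite /eff eqxx; case: eqP => [/eqP|]; rewrite ?subr0 //; lia. Qed.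
Lemma eff_e1 e s : eff e s e.+1 = - s.
Proof. by rewrite /eff eqxx; case: eqP => [/eqP|]; rewrite ?sub0r //; lia. Qed.

Lemma sum_ind (M E : nat) (S : int) :
  \sum_(0 <= k < M) (if k == E then S else 0) = if (E < M)%N then S else 0.
Proof.
elim: M => [|M IH]; first by rewrite big_geq.
rewrite big_nat_recr //= IH.
case: (ltngtP E M) => h.
- by rewrite ltnS (ltnW h) addr0.
- by rewrite ltnNge h addr0.
- by rewrite h ltnSn add0r.
Qed.

Lemma sum_eff (M E : nat) S : (E.+1 < M)%N -> \sum_(0 <= k < M) eff E S k = 0.
Proof.
move=> h; rewrite /eff sumrB !sum_ind h.
by rewrite (ltn_trans (ltnSn E) h) subrr.
Qed.

Lemma normc_step n m j a d : normc n m j (normc n m j a + d) = normc n m j (a + d).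
Proof. by rewrite /normc; case: ifP => h; rewrite h ?modzDml. Qed.

Lemma coord_eq_step n m j a d :
  coord_eq n m j (normc n m j a) (normc n m j (a + d) - d).
Proof.
rewrite /coord_eq /normc; case: (boolP ((j == 0%N) || (j == m.+1))) => h /=; last by rewrite addrK.
have h1 := divz_eq a n%:Z; have h2 := divz_eq (a + d) n%:Z.
have -> : (a %% n%:Z)%Z - (((a + d) %% n%:Z)%Z - d) =
   ((a + d) %/ n%:Z)%Z * n%:Z - (a %/ n%:Z)%Z * n%:Z by lia.
by rewrite rpredB // dvdz_mull // dvdzz.
Qed.

Lemma coord_eq_inv n m j a v d :
  ((j == 0%N) || (j == m.+1) -> 0 <= v < n%:Z) ->
  coord_eq n m j (normc n m j a) (v + d) -> v = normc n m j (a - d).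
Proof.
rewrite /coord_eq /normc; case: (boolP ((j == 0%N) || (j == m.+1))) => h /=; last by move=> _ /eqP ->; rewrite addrK.
move=> /(_ isT) hv hd; rewrite -(modz_small hv); apply/eqP.
rewrite eqz_mod_dvd.
have h1 := divz_eq a n%:Z.
have -> : v - (a - d) = - ((a %% n%:Z)%Z - (v + d)) - (a %/ n%:Z)%Z * n%:Z by lia.
by rewrite rpredB ?rpredN // dvdz_mull // dvdzz.
Qed.

Lemma normc_vertex_id n m z j : dyoke_vertex n m z -> normc n m j (z j) = z j.
Proof.
case=> h0 hm _ _ _; rewrite /normc; case: eqP => [->|_] /=; first by rewrite modz_small.
by case: eqP => [->|_] //; rewrite modz_small.
Qed.

Lemma normc_int n m j a : (1 <= j <= m)%N -> normc n m j a = a.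
Proof. by rewrite /normc => /andP[h1 h2]; case: eqP => [E|_]; case: eqP => [E'|_] //; lia. Qed.

Lemma normc_big n m j a : (m.+1 < j)%N -> normc n m j a = a.
Proof. by rewrite /normc => h; case: eqP => [E|_]; case: eqP => [E'|_] //; lia. Qed.

Lemma normc_dvd n m j a : (n%:Z %| normc n m j a - a)%Z.
Proof.
rewrite /normc; case: ifP => _; last by rewrite subrr dvdz0.
have h := divz_eq a n%:Z.
have -> : (a %% n%:Z)%Z - a = - ((a %/ n%:Z)%Z * n%:Z) by lia.
by rewrite rpredN dvdz_mull // dvdzz.
Qed.

Lemma path_of_raw n m z (Y : nat -> nat -> int) (E : nat -> nat) (S : nat -> int) N :
  (0 < n)%N -> dyoke_vertex n m z ->
  (forall j, Y 0%N j = z j) ->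
  (forall t j, (t < N)%N -> Y t.+1 j = Y t j + eff (E t) (S t) j) ->
  (forall t, (t < N)%N -> (E t <= m)%N /\ (S t = 1 \/ S t = -1)) ->
  (forall t j, (t <= N)%N -> (1 <= j <= m)%N -> -1 <= Y t j <= 1) ->
  dyoke_path n m (fun t j => normc n m j (Y t j)) N z (fun j => normc n m j (Y N j)).
Proof.
move=> n0 zv Y0 YS ES Yv.
have zbig : forall t j, (t <= N)%N -> (m.+1 < j)%N -> Y t j = 0.
  elim=> [|t IH] j tN jb; first by rewrite Y0; case: zv => _ _ _ -> .
  have [Em _] := ES t tN.
  rewrite YS // IH ?(ltnW tN) // eff_out ?add0r //; apply/eqP; lia.
have zsum : forall t, (t <= N)%N -> \sum_(0 <= k < m.+2) Y t k = \sum_(0 <= k < m.+2) z k.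
  elim=> [|t IH] tN; first by apply: eq_bigr => k _; rewrite Y0.
  have [Em _] := ES t tN.
  rewrite -IH ?(ltnW tN) //.
  under eq_bigr => k _ do rewrite YS //.
  by rewrite big_split /= sum_eff ?addr0 //; lia.
split => //.
- by apply: functional_extensionality => j; rewrite Y0 normc_vertex_id.
- move=> t tN; split.
  + by rewrite /normc eqxx /= modz_ge0 ?ltz_pmod //; lia.
  + by rewrite /normc eqxx orbT /= modz_ge0 ?ltz_pmod //; lia.
  + move=> k hk; rewrite normc_int //.
    have := Yv t k tN hk => hb.
    have : Y t k = -1 \/ Y t k = 0 \/ Y t k = 1 by lia.
    by case=> [->|[->|->]]; rewrite !inE.
  + by move=> k hk; rewrite normc_big // zbig.
  + have -> : \sum_(0 <= k < m.+2) normc n m k (Y t k) =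
       \sum_(0 <= k < m.+2) (normc n m k (Y t k) - Y t k) + \sum_(0 <= k < m.+2) z k.
      by rewrite -(zsum t) // -big_split /=; apply: eq_bigr => k _; rewrite subrK.
    rewrite rpredD //; first by apply: rpred_sum => k _; apply: normc_dvd.
    by case: zv.
- move=> t tN; have [Em Sv] := ES t tN.
  exists (E t); split => //; split.
    by move=> j h1 h2; rewrite YS // eff_out // addr0.
  case: Sv => Sv; [right|left]; rewrite !YS // eff_e eff_e1 Sv.
  + split; first exact: coord_eq_step.
    by have := coord_eq_step n m (E t).+1 (Y t (E t).+1) (-1); rewrite opprK.
  + split; first by have := coord_eq_step n m (E t) (Y t (E t)) (-1); rewrite opprK.
    rewrite opprK; exact: coord_eq_step.
Qed.

Lemma coord_eq_inv' n m (u v : nat -> int) j d :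
  dyoke_vertex n m u -> dyoke_vertex n m v ->
  coord_eq n m j (u j) (v j + d) -> v j = normc n m j (u j - d).
Proof.
move=> uv vv; rewrite -{1}(normc_vertex_id j uv) => h.
apply: coord_eq_inv h => /orP[/eqP->|/eqP->]; case: vv => //.
Qed.

Lemma extract n m x d z b :
  dyoke_path n m x d z b ->
  exists (e : nat -> nat) (s : nat -> int),
    (forall k, (k < d)%N -> (e k <= m)%N /\ (s k = 1 \/ s k = -1)) /\
    (forall t j, (t <= d)%N -> x t j = normc n m j (raw z e s t j)).
Proof.
case=> x0 xd xv xa.
have H : forall t, exists p : nat * int, (t < d)%N ->
   [/\ (p.1 <= m)%N, (p.2 = 1 \/ p.2 = -1) &
       forall j, x t.+1 j = normc n m j (x t j + eff p.1 p.2 j)].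
  move=> t; case: (ltnP t d) => td; last by exists (0%N, 1) => h; lia.
  have uv := xv t (ltnW td); have vv := xv t.+1 td.
  have [i0 [i0m [oth dis]]] := xa t td.
  have oth' : forall S j, j != i0 -> j != i0.+1 ->
      x t.+1 j = normc n m j (x t j + eff i0 S j).
    by move=> S j h1 h2; rewrite eff_out // addr0 normc_vertex_id // oth.
  case: dis => [[c1 c2]|[c1 c2]].
  - exists (i0, -1) => _ /=; split => //; first by right.
    move=> j; case: (eqVneq j i0) => [->|h1].
      by rewrite eff_e; apply: coord_eq_inv'.
    case: (eqVneq j i0.+1) => [->|h2]; last exact: oth'.
    by rewrite eff_e1; apply: coord_eq_inv'.
  - exists (i0, 1) => _ /=; split => //; first by left.
    move=> j; case: (eqVneq j i0) => [->|h1].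
      by rewrite eff_e; have := coord_eq_inv' uv vv c1; rewrite opprK.
    case: (eqVneq j i0.+1) => [->|h2]; last exact: oth'.
    by rewrite eff_e1; apply: coord_eq_inv'.
have [f Hf] := functional_choice _ H.
exists (fun k => (f k).1), (fun k => (f k).2); split.
  by move=> k kd; have [? ? _] := Hf k kd.
elim=> [|t IH] j td; first by rewrite raw0 x0 normc_vertex_id // -x0; apply: xv.
have [_ _ ->] := Hf t td.
by rewrite IH ?(ltnW td) // normc_step rawS.
Qed.

From Stdlib Require Import Classical.

Lemma eff_nz E S c : eff E S c != 0 ->
  (c = E /\ eff E S c = S) \/ (c = E.+1 /\ eff E S c = - S).
Proof.
rewrite /eff; case: (c =P E) => h1; case: (c =P E.+1) => h2 /=; lia.
Qed.

Lemma eff_range E S c : (S = 1 \/ S = -1) -> -1 <= eff E S c <= 1.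
Proof. by rewrite /eff; case: (c =P E) => h1; case: (c =P E.+1) => h2; lia. Qed.

Lemma eff_add E S1 S2 c : eff E S1 c + eff E S2 c = eff E (S1 + S2) c.
Proof. by rewrite /eff; case: (c =P E) => h1; case: (c =P E.+1) => h2; lia. Qed.

Lemma eff_0 E c : eff E 0 c = 0.
Proof. by rewrite /eff; case: (c =P E) => h1; case: (c =P E.+1) => h2; lia. Qed.

Lemma mono (g h : nat -> int) (dl : int) p q :
  (dl = 1 \/ dl = -1) -> (forall k, g k.+1 = g k + h k) ->
  (forall k, (p <= k < q)%N -> -1 <= h k <= 1 /\ h k <> - dl) ->
  (p <= q)%N -> g p * dl <= g q * dl.
Proof.
move=> hd gs; elim: q => [|q IH] hh pq.
  by have -> : p = 0%N by lia.
case: (ltngtP p q.+1) => hpq; last by rewrite hpq.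
  have := IH (fun k hk => hh k ltac:(lia)) ltac:(lia).
  have := hh q ltac:(lia); rewrite gs.
  by case: hd => ->; lia.
lia.
Qed.

Section Shorten.
Variables (n m : nat) (z : nat -> int) (e : nat -> nat) (s : nat -> int) (d : nat).
Hypothesis n0 : (0 < n)%N.
Hypothesis zv : dyoke_vertex n m z.
Hypothesis ES : forall k, (k < d)%N -> (e k <= m)%N /\ (s k = 1 \/ s k = -1).
Hypothesis RV : forall t j, (t <= d)%N -> (1 <= j <= m)%N -> -1 <= raw z e s t j <= 1.

Local Notation R := (raw z e s).
Local Notation ef k := (eff (e k) (s k)).

Definition bad a b := [/\ (a < b)%N, (b < d)%N, e a = e b & s a + s b = 0].

Lemma bad_eff a b c : bad a b -> ef a c + ef b c = 0.
Proof. by case=> _ _ -> h; rewrite eff_add h eff_0. Qed.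

Lemma no_good a b t c : bad a b -> (a < t <= b)%N -> (1 <= c <= m)%N ->
  ~ (-1 <= R t c - ef a c <= 1) ->
  exists a' b', bad a' b' /\ (b' - a' < b - a)%N.
Proof.
move=> bab /andP[hat tb] cm nv.
have bab' := bab; case: bab' => ab bd eab sab.
have [_ sa] := ES (ltn_trans ab bd).
have [_ sb] := ES bd.
have Rt := RV (leq_trans tb (ltnW bd)) cm.
have ra := eff_range (e a) c sa.
set dl := ef a c in nv ra.
have dnz : dl != 0 by apply/eqP => h; rewrite h subr0 in nv.
have hd : dl = 1 \/ dl = -1 by move/eqP: dnz; lia.
have Rtv : R t c = - dl by lia.
have effb : ef b c = - dl by have := bad_eff c bab; rewrite -/dl; lia.
have hstep : forall k, R k.+1 c = R k c + ef k c by move=> k; rewrite rawS.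
have hrng : forall k, (k < d)%N -> -1 <= ef k c <= 1.
  by move=> k kd; have [_ sk] := ES kd; apply: eff_range.
have [k1 [hk1 ek1]] : exists k1, (a < k1 < t)%N /\ ef k1 c = - dl.
  apply: NNPP => nk.
  have := @mono (fun u => R u c) (fun u => ef u c) dl a.+1 t hd hstep.
  have Ra := RV (ltnW (ltn_trans ab bd)) cm.
  have Ra1 := RV (leq_ltn_trans ab bd) cm.
  rewrite hstep -/dl in Ra1.
  move=> /(_ _ hat) H.
  have : R a.+1 c * dl <= R t c * dl.
    apply: H => k hk; split; first by apply: hrng; lia.
    by move=> ek; apply: nk; exists k; split => //; lia.
  by rewrite hstep Rtv -/dl; case: hd => ->; lia.
have [k2 [hk2 ek2]] : exists k2, (t <= k2 < b)%N /\ ef k2 c = dl.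
  apply: NNPP => nk.
  have hd' : - dl = 1 \/ - dl = -1 by lia.
  have := @mono (fun u => R u c) (fun u => ef u c) (- dl) t b hd' hstep.
  have Rb1 := RV bd cm.
  have Rb := RV (ltnW bd) cm.
  rewrite hstep effb in Rb1.
  move=> /(_ _ tb) H.
  have : R t c * - dl <= R b c * - dl.
    apply: H => k hk; split; first by apply: hrng; lia.
    by rewrite opprK => ek; apply: nk; exists k; split => //; lia.
  by rewrite Rtv; case: hd => hd; rewrite hd in Rb1 *; lia.
have k1d : (k1 < d)%N by lia.
have k2d : (k2 < d)%N by lia.
have [_ sk1] := ES k1d; have [_ sk2] := ES k2d.
have Da := eff_nz dnz.
have Db : ef b c != 0 by rewrite effb oppr_eq0.
have Dk1 : ef k1 c != 0 by rewrite ek1 oppr_eq0.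
have Dk2 : ef k2 c != 0 by rewrite ek2.
move/eff_nz: Db; move/eff_nz: Dk1; move/eff_nz: Dk2 => Dk2 Dk1 Db.
rewrite -/dl in Da.
clear -Da Db Dk1 Dk2 ek1 ek2 effb hk1 hk2 hat tb ab bd eab sab.
case: (eqVneq (e k1) (e a)) => h1.
  exists a, k1; split; last by lia.
  by split; [lia|lia|rewrite h1|lia].
case: (eqVneq (e k2) (e k1)) => h2.
  exists k1, k2; split; last by lia.
  by split; [lia|lia|rewrite h2|lia].
exists k2, b; split; last by lia.
split; lia.
Qed.


Lemma exists_good a b : bad a b -> exists a' b', bad a' b' /\
  forall t c, (a' < t <= b')%N -> (1 <= c <= m)%N -> -1 <= R t c - ef a' c <= 1.
Proof.
suff H : forall g a b, (b - a < g)%N -> bad a b -> exists a' b', bad a' b' /\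
  forall t c, (a' < t <= b')%N -> (1 <= c <= m)%N -> -1 <= R t c - ef a' c <= 1.
  by move=> hb; apply: (H (b - a).+1).
elim=> [|g IH] a0 b0 hg hb; first lia.
case: (classic (exists a' b', bad a' b' /\ (b' - a' < b0 - a0)%N)) => [[a' [b' [hb' hlt]]]|nex].
  by apply: (IH a' b') => //; lia.
exists a0, b0; split => // t c ht hc; apply: NNPP => nv; apply: nex.
exact: no_good hb ht hc nv.
Qed.

Lemma shorten a0 b0 : bad a0 b0 ->
  exists y, dyoke_path n m y (d - 2) z (fun j => normc n m j (R d j)).
Proof.
move=> hb0; have [a [b [hb good]]] := exists_good hb0.
have effab : forall j, ef b j = - ef a j by move=> j; have := bad_eff j hb; lia.
case: hb => ab bd eab sab.
pose Y t j := if (t <= a)%N then R t j else if (t < b)%N then R t.+1 j - ef a j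
  else R t.+2 j.
pose sk t := if (t < a)%N then t else if (t.+1 < b)%N then t.+1 else t.+2.
have YS : forall t j, Y t.+1 j = Y t j + eff (e (sk t)) (s (sk t)) j.
  move=> t j; rewrite /Y /sk.
  case: (ltngtP t a) => h.
  - by rewrite rawS.
  - have f1 : (t.+1 <= a)%N = false by apply/negbTE; lia.
    have f2 : (t <= a)%N = false by apply/negbTE; lia.
    rewrite ?f1 ?f2; case: (ltngtP t.+1 b) => h3.
    + by rewrite ?(ltnW h3) !rawS; lia.
    + have f3 : (t < b)%N = false by apply/negbTE; lia.
      by rewrite ?f3 !rawS.
    + have f3 : (t < b)%N by lia.
      have := effab j; rewrite -h3 => hE.
      by rewrite ?f3 !rawS hE; lia.
  - rewrite -?h ?ltnn ?leqnn; case: (ltnP t.+1 b) => h2.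
    + by rewrite !rawS; lia.
    + have eb : b = t.+1 by lia.
      have := effab j; rewrite eb -h => hE.
      by rewrite !rawS hE; lia.
set T := (d - 2)%N.
have hT : d = T.+2 by rewrite /T; lia.
have Yend : forall j, Y T j = R d j.
  move=> j; rewrite /Y [in RHS]hT; case: (leqP T a) => h1.
    have ea : a = T by lia.
    have eb : b = T.+1 by lia.
    have := effab j; rewrite eb ea => hE.
    by rewrite !rawS hE; lia.
  case: (ltnP T b) => h2; last by [].
  have eb : b = T.+1 by lia.
  have := effab j; rewrite eb => hE.
  by rewrite !rawS hE; lia.
have P := @path_of_raw n m z Y (fun t => e (sk t)) (fun t => s (sk t)) T n0 zv.
exists (fun t j => normc n m j (Y t j)).
have -> : (fun j => normc n m j (R d j)) = (fun j => normc n m j (Y T j)).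
  by apply: functional_extensionality => j; rewrite Yend.
apply: P.
- by move=> j; rewrite /Y leq0n raw0.
- by move=> t j _; apply: YS.
- move=> t tT; apply: ES; rewrite /sk; case: ifP => h1; try lia.
  case: ifP => h2; lia.
- move=> t c tT hc; rewrite /Y; case: ifP => h1.
    apply: RV => //; lia.
  case: ifP => h2.
    apply: good => //; lia.
  apply: RV => //; lia.
Qed.

End Shorten.

Lemma monoN (al : nat -> nat) a p p' :
  (forall p, (p < a)%N -> al p.+1 = al p \/ al p.+1 = (al p).+1) ->
  (p <= p' <= a)%N -> (al p <= al p')%N.
Proof.
move=> st; elim: p' => [|p' IH] /andP[h1 h2]; first by have -> : p = 0%N by lia.
case: (ltngtP p p'.+1) => h; last by rewrite h.
  have := IH ltac:(lia); have := st p' ltac:(lia); lia.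
lia.
Qed.

Lemma onto (c : nat -> nat) N :
  c 0%N = 0%N -> (forall t, (t < N)%N -> c t.+1 = c t \/ c t.+1 = (c t).+1) ->
  forall p, (p <= c N)%N -> exists2 t, (t <= N)%N & c t = p.
Proof.
move=> c0 st; suff H : forall t, (t <= N)%N -> forall p, (p <= c t)%N ->
   exists2 t', (t' <= t)%N & c t' = p.
  by move=> p hp; have [t' h1 h2] := H N (leqnn _) p hp; exists t'.
elim=> [|t IH] tN p hp; first by exists 0%N => //; lia.
case: (leqP p (c t)) => h.
  by have [t' h1 h2] := IH (ltnW tN) p h; exists t' => //; lia.
by exists t.+1 => //; have := st t tN; lia.
Qed.

Lemma same_vals (T : Type) (F : nat -> T) (f g : nat -> nat) d A (v : T) :
  (forall t, (t <= d)%N -> (f t <= A)%N) -> (forall p, (p <= A)%N -> exists2 t, (t <= d)%N & f t = p) ->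
  (forall t, (t <= d)%N -> (g t <= A)%N) -> (forall p, (p <= A)%N -> exists2 t, (t <= d)%N & g t = p) ->
  (exists2 t, (t <= d)%N & F (f t) = v) -> (exists2 t, (t <= d)%N & F (g t) = v).
Proof.
move=> fb _ _ go [t td <-]; have [t' h1 h2] := go (f t) (fb t td).
by exists t'; rewrite ?h2.
Qed.

Lemma schedule (al be : nat -> nat) a b :
  al 0%N = 0%N -> be 0%N = 0%N ->
  (forall p, (p < a)%N -> al p.+1 = al p \/ al p.+1 = (al p).+1) ->
  (forall q, (q < b)%N -> be q.+1 = be q \/ be q.+1 = (be q).+1) ->
  al a = be b ->
  exists P Q : nat -> nat, [/\ P 0%N = 0%N /\ Q 0%N = 0%N,
    (forall t, (t < a + b)%N -> (P t.+1 = (P t).+1 /\ Q t.+1 = Q t) \/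
                                (P t.+1 = P t /\ Q t.+1 = (Q t).+1)),
    P (a + b)%N = a /\ Q (a + b)%N = b &
    forall t, (t <= a + b)%N -> [/\ (P t <= a)%N, (Q t <= b)%N &
                                    (be (Q t) <= al (P t) <= (be (Q t)).+1)%N]].
Proof.
move=> a0 b0 sa sb ab.
have ma := monoN sa; have mb := monoN sb.
suff H : forall N p0 q0, (a - p0 + (b - q0))%N = N -> (p0 <= a)%N -> (q0 <= b)%N ->
    (be q0 <= al p0 <= (be q0).+1)%N ->
  exists P Q : nat -> nat, [/\ P 0%N = p0 /\ Q 0%N = q0,
    (forall t, (t < N)%N -> (P t.+1 = (P t).+1 /\ Q t.+1 = Q t) \/
                                (P t.+1 = P t /\ Q t.+1 = (Q t).+1)),
    P N = a /\ Q N = b &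
    forall t, (t <= N)%N -> [/\ (P t <= a)%N, (Q t <= b)%N &
                                    (be (Q t) <= al (P t) <= (be (Q t)).+1)%N]].
  have := H (a + b)%N 0%N 0%N; rewrite !subn0 a0 b0 => /(_ erefl isT isT isT).
  by [].
elim=> [|N IH] p0 q0 hN hp hq hinv.
  exists (fun _ => p0), (fun _ => q0); split => //;
    first [by move=> t; lia | by split; lia | by move=> t _; split].
have [p1 [q1 [h1 h2 h3 h4 st]]] : exists p1 q1, [/\ (a - p1 + (b - q1))%N = N,
   (p1 <= a)%N, (q1 <= b)%N, (be q1 <= al p1 <= (be q1).+1)%N &
   ((p1 = p0.+1 /\ q1 = q0) \/ (p1 = p0 /\ q1 = q0.+1))].
  case: (ltnP (be q0) (al p0)) => hc.
  -
    case: (ltnP q0 b) => hqb.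
      exists p0, q0.+1; split; try lia.
      by have := sb q0 hqb; lia.
    have hle : (al p0 <= al a)%N by apply: ma; lia.
    have eq : q0 = b by lia.
    rewrite eq in hc; exfalso; lia.
  - case: (ltnP p0 a) => hpa.
      exists p0.+1, q0; split; try lia.
      by have := sa p0 hpa; lia.
    have ep : p0 = a by lia.
    subst p0.
    have hqb : (q0 < b)%N by lia.
    exists a, q0.+1; split; try lia.
    have := sb q0 hqb; have : (be q0.+1 <= be b)%N by apply: mb; lia.
    lia.
have [P [Q [[P0 Q0] Pst [PN QN] Pb]]] := IH p1 q1 h1 h2 h3 h4.
exists (fun t => if t is t'.+1 then P t' else p0), (fun t => if t is t'.+1 then Q t' else q0).
split => //.
- case=> [|t] ht /=; first by rewrite P0 Q0; case: st => [[-> ->]|[-> ->]]; [left|right].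
  by apply: Pst.
- case=> [|t] ht /=; first by split => //.
  by apply: Pb.
Qed.

Lemma sum_if_count (T : Type) (r : seq T) (P : pred T) (c : int) :
  \sum_(k <- r) (if P k then c else 0) = (count P r)%:Z * c.
Proof.
elim: r => [|x r IH]; first by rewrite big_nil mul0r.
rewrite big_cons IH /=; case: (P x) => /=; lia.
Qed.

Lemma filter_prefix (P : pred nat) t d : (t <= d)%N ->
  [seq k <- iota 0 t | P k] = take (count P (iota 0 t)) [seq k <- iota 0 d | P k].
Proof.
move=> td; rewrite -(subnKC td) iotaD filter_cat take_size_cat //.
by rewrite size_filter.
Qed.

Lemma sum_rcons (r : seq nat) (y : nat) (F : nat -> int) :
  \sum_(k <- rcons r y) F k = \sum_(k <- r) F k + F y.
Proof. by rewrite -cats1 big_cat big_seq1. Qed.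

Section Merge.
Variables (n m : nat) (z : nat -> int) (e : nat -> nat) (s : nat -> int) (d i : nat)
  (x : nat -> nat -> int).
Hypothesis n0 : (0 < n)%N.
Hypothesis zv : dyoke_vertex n m z.
Hypothesis ES : forall k, (k < d)%N -> (e k <= m)%N /\ (s k = 1 \/ s k = -1).
Hypothesis RV : forall t j, (t <= d)%N -> (1 <= j <= m)%N -> -1 <= raw z e s t j <= 1.
Hypothesis hi : (1 <= i <= m)%N.
Hypothesis nobad : forall a b, ~ bad e s d a b.
Hypothesis X : forall t j, (t <= d)%N -> x t j = normc n m j (raw z e s t j).
Hypothesis xd : x d = dyoke_zero.
Hypothesis xg : forall x' d', dyoke_path n m x' d' z dyoke_zero -> (d <= d')%N.

Local Notation R := (raw z e s).
Local Notation ef k := (eff (e k) (s k)).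

Definition Lp : pred nat := fun k => (e k < i)%N.
Definition Ls := [seq k <- iota 0 d | Lp k].
Definition Rs := [seq k <- iota 0 d | predC Lp k].
Definition W p q j := z j + \sum_(k <- take p Ls) ef k j + \sum_(k <- take q Rs) ef k j.
Definition cL t := count Lp (iota 0 t).
Definition cR t := count (predC Lp) (iota 0 t).

Lemma raw_W t j : (t <= d)%N -> R t j = W (cL t) (cR t) j.
Proof.
move=> td; rewrite /raw /W /cL /cR /Ls /Rs -!(filter_prefix _ td) !big_filter.
rewrite -addrA; congr (_ + _).
by rewrite (bigID Lp) /= /index_iota subn0.
Qed.

Lemma W_stepL p q j : (p < size Ls)%N -> W p.+1 q j = W p q j + ef (nth 0%N Ls p) j.
Proof. by move=> hp; rewrite /W (take_nth 0%N hp) sum_rcons; lia. Qed.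

Lemma W_stepR p q j : (q < size Rs)%N -> W p q.+1 j = W p q j + ef (nth 0%N Rs q) j.
Proof. by move=> hq; rewrite /W (take_nth 0%N hq) sum_rcons; lia. Qed.

Lemma memLs k : k \in Ls -> (k < d)%N /\ (e k < i)%N.
Proof. rewrite mem_filter mem_iota => /andP[h1 /andP[_ h2]]; move: h1; rewrite /= /Lp => h1; split; lia. Qed.

Lemma memRs k : k \in Rs -> (k < d)%N /\ (i <= e k)%N.
Proof. rewrite mem_filter mem_iota => /andP[h1 /andP[_ h2]]; move: h1; rewrite /= /Lp => h1; split; lia. Qed.

Lemma W_left p q q' j : (j < i)%N -> W p q j = W p q' j.
Proof.
move=> ji; rewrite /W.
have Z0 : forall q0, \sum_(k <- take q0 Rs) ef k j = 0.
  move=> q0; apply: big1_seq => k /andP[_ /mem_take /memRs [_ h]].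
  by apply: eff_out; apply/eqP; lia.
by rewrite !Z0.
Qed.

Lemma W_right p p' q j : (i < j)%N -> W p q j = W p' q j.
Proof.
move=> ji; rewrite /W.
have Z0 : forall p0, \sum_(k <- take p0 Ls) ef k j = 0.
  move=> p0; apply: big1_seq => k /andP[_ /mem_take /memLs [_ h]].
  by apply: eff_out; apply/eqP; lia.
by rewrite !Z0.
Qed.

Lemma W0 j : W 0 0 j = z j.
Proof. by rewrite /W !take0 !big_nil !addr0. Qed.

Lemma cL_end : cL d = size Ls.
Proof. by rewrite /cL /Ls size_filter. Qed.
Lemma cR_end : cR d = size Rs.
Proof. by rewrite /cR /Rs size_filter. Qed.

Lemma W_end j : W (size Ls) (size Rs) j = R d j.
Proof. by rewrite raw_W // cL_end cR_end. Qed.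

Lemma cL_step t : cL t.+1 = cL t \/ cL t.+1 = (cL t).+1.
Proof.
rewrite /cL -addn1 iotaD count_cat /= add0n addn0.
by case: (Lp t); [right; rewrite addn1 | left; rewrite addn0].
Qed.
Lemma cR_step t : cR t.+1 = cR t \/ cR t.+1 = (cR t).+1.
Proof.
rewrite /cR -addn1 iotaD count_cat /= add0n addn0.
by case: (~~ Lp t); [right; rewrite addn1 | left; rewrite addn0].
Qed.

Lemma cL_onto p : (p <= size Ls)%N -> exists2 t, (t <= d)%N & cL t = p.
Proof. by rewrite -cL_end; apply: onto => // t _; apply: cL_step. Qed.
Lemma cR_onto q : (q <= size Rs)%N -> exists2 t, (t <= d)%N & cR t = q.
Proof. by rewrite -cR_end; apply: onto => // t _; apply: cR_step. Qed.

Lemma cL_bound t : (t <= d)%N -> (cL t <= size Ls)%N.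
Proof.
move=> td; rewrite -cL_end; apply: (@monoN cL d) => //; first by move=> p _; apply: cL_step.
by rewrite td leqnn.
Qed.
Lemma cR_bound t : (t <= d)%N -> (cR t <= size Rs)%N.
Proof.
move=> td; rewrite -cR_end; apply: (@monoN cR d) => //; first by move=> p _; apply: cR_step.
by rewrite td leqnn.
Qed.

Lemma merge_ok (P Q : nat -> nat) :
  P 0%N = 0%N -> Q 0%N = 0%N ->
  (forall t, (t < d)%N -> (P t.+1 = (P t).+1 /\ Q t.+1 = Q t) \/
                          (P t.+1 = P t /\ Q t.+1 = (Q t).+1)) ->
  P d = size Ls -> Q d = size Rs ->
  (forall t, (t <= d)%N -> (P t <= size Ls)%N /\ (Q t <= size Rs)%N) ->
  (forall t, (t <= d)%N -> -1 <= W (P t) (Q t) i <= 1) ->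
  dyoke_geodesic n m (fun t j => normc n m j (W (P t) (Q t) j)) d z dyoke_zero /\
  (forall j, (j <= m.+1)%N -> j != i -> forall v,
     coord_values (fun t j => normc n m j (W (P t) (Q t) j)) d j v <-> coord_values x d j v).
Proof.
move=> P0 Q0 st PN QN bnd Wi.
have Pst : forall t, (t < d)%N -> P t.+1 = P t \/ P t.+1 = (P t).+1.
  by move=> t td; case: (st t td) => [[-> _]|[-> _]]; [right|left].
have Qst : forall t, (t < d)%N -> Q t.+1 = Q t \/ Q t.+1 = (Q t).+1.
  by move=> t td; case: (st t td) => [[_ ->]|[_ ->]]; [left|right].
pose sk t := if P t.+1 == (P t).+1 then nth 0%N Ls (P t) else nth 0%N Rs (Q t).
have skd : forall t, (t < d)%N -> (sk t < d)%N.
  move=> t td; rewrite /sk; case: (st t td) => [[hp hq]|[hp hq]].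
    rewrite hp eqxx; apply: (proj1 (memLs _)); apply: mem_nth.
    by have := proj1 (bnd t.+1 td); rewrite hp.
  have -> : (P t.+1 == (P t).+1) = false by rewrite hp; apply/negbTE; lia.
  apply: (proj1 (memRs _)); apply: mem_nth.
  by have := proj2 (bnd t.+1 td); rewrite hq.
have PP := @path_of_raw n m z (fun t j => W (P t) (Q t) j) (fun t => e (sk t))
   (fun t => s (sk t)) d n0 zv.
have hpath : dyoke_path n m (fun t j => normc n m j (W (P t) (Q t) j)) d z dyoke_zero.
  have -> : dyoke_zero = (fun j => normc n m j (W (P d) (Q d) j)).
    apply: functional_extensionality => j.
    by rewrite PN QN W_end -X // xd.
  apply: PP.
  - by move=> j; rewrite P0 Q0 W0.
  - move=> t j td; rewrite /sk; case: (st t td) => [[hp hq]|[hp hq]].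
      rewrite hp hq eqxx W_stepL //.
      by have := proj1 (bnd t.+1 td); rewrite hp.
    have -> : (P t.+1 == (P t).+1) = false by rewrite hp; apply/negbTE; lia.
    rewrite hp hq W_stepR //.
    by have := proj2 (bnd t.+1 td); rewrite hq.
  - by move=> t td; apply: ES; apply: skd.
  - move=> t c td hc.
    case: (ltngtP c i) => hci; last by rewrite hci; apply: Wi.
    + have [t0 t0d ht0] := cL_onto (proj1 (bnd t td)).
      rewrite (W_left _ (Q t) (cR t0)) // -ht0 -raw_W //; exact: RV.
    + have [t0 t0d ht0] := cR_onto (proj2 (bnd t td)).
      rewrite (W_right (P t) (cL t0)) // -ht0 -raw_W //; exact: RV.
split; first by split => // x' d' /xg.
move=> j jm ji v; case: (ltngtP j i) => hji; last by rewrite hji eqxx in ji.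
- split.
    case=> t td <-; have [t0 t0d ht0] := cL_onto (proj1 (bnd t td)).
    exists t0 => //; rewrite X // raw_W // (W_left _ (cR t0) 0) // ht0.
    by rewrite (W_left _ (Q t) 0).
  case=> t td <-; have hb : (cL t <= P d)%N by rewrite PN cL_bound.
  have [t0 t0d ht0] := onto P0 Pst hb.
  exists t0 => //; rewrite X // raw_W // (W_left _ (cR t) 0) // -ht0.
  by rewrite (W_left _ (Q t0) 0).
- split.
    case=> t td <-; have [t0 t0d ht0] := cR_onto (proj2 (bnd t td)).
    exists t0 => //; rewrite X // raw_W // (W_right (cL t0) 0) // ht0.
    by rewrite (W_right (P t) 0).
  case=> t td <-; have hb : (cR t <= Q d)%N by rewrite QN cR_bound.
  have [t0 t0d ht0] := onto Q0 Qst hb.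
  exists t0 => //; rewrite X // raw_W // (W_right (cL t) 0) // -ht0.
  by rewrite (W_right (P t0) 0).
Qed.

Lemma sign_const E : exists sg : int, (sg = 1 \/ sg = -1) /\
  forall k, (k < d)%N -> e k = E -> s k = sg.
Proof.
case: (classic (exists k0, (k0 < d)%N /\ e k0 = E)) => [[k0 [k0d ek0]]|nk].
  have [_ sk0] := ES k0d; exists (s k0); split => // k kd ek.
  have [_ sk] := ES kd; apply: NNPP => ne.
  have hs : s k + s k0 = 0 by lia.
  case: (ltngtP k k0) => h.
  - have hb : bad e s d k k0 by split => //; congruence.
    exact: (nobad hb).
  - have hb : bad e s d k0 k by split => //; [congruence|lia].
    exact: (nobad hb).
  - by apply: ne; rewrite h.
exists 1; split; first by left.
by move=> k kd ek; exfalso; apply: nk; exists k.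
Qed.

Hypothesis zi : z i = 0.
Variables (sg1 sg2 : int).
Hypothesis sg1v : sg1 = 1 \/ sg1 = -1.
Hypothesis sg2v : sg2 = 1 \/ sg2 = -1.
Hypothesis S1 : forall k, (k < d)%N -> (e k).+1 = i -> s k = sg1.
Hypothesis S2 : forall k, (k < d)%N -> e k = i -> s k = sg2.

Definition al p := count (fun k => (e k).+1 == i) (take p Ls).
Definition be q := count (fun k => e k == i) (take q Rs).

Lemma W_i p q : W p q i = (al p)%:Z * - sg1 + (be q)%:Z * sg2.
Proof.
rewrite /W zi add0r.
rewrite (@eq_big_seq _ _ _ _ (take p Ls) _ (fun k => if (e k).+1 == i then - sg1 else 0)); last first.
  move=> k /mem_take /memLs [kd ek]; rewrite /eff.
  have hn : (i == e k) = false by apply/negbTE/eqP; lia.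
  rewrite hn; case: ((e k).+1 =P i) => h3.
    by rewrite h3 eqxx S1 // sub0r.
  have -> : (i == (e k).+1) = false by apply/negbTE/eqP; lia.
  by rewrite subrr.
rewrite (@eq_big_seq _ _ _ _ (take q Rs) _ (fun k => if e k == i then sg2 else 0)); last first.
  move=> k /mem_take /memRs [kd ek]; rewrite /eff.
  have -> : (i == (e k).+1) = false by apply/negbTE/eqP; lia.
  rewrite subr0 eq_sym; case: (e k =P i) => h3 //.
  by rewrite S2.
by rewrite !sum_if_count.
Qed.

Lemma al_step p : (p < size Ls)%N -> al p.+1 = al p \/ al p.+1 = (al p).+1.
Proof.
move=> hp; rewrite /al (take_nth 0%N hp) -cats1 count_cat /= addn0.
by case: (_ == i); [right; rewrite addn1 | left; rewrite addn0].
Qed.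
Lemma be_step q : (q < size Rs)%N -> be q.+1 = be q \/ be q.+1 = (be q).+1.
Proof.
move=> hq; rewrite /be (take_nth 0%N hq) -cats1 count_cat /= addn0.
by case: (_ == i); [right; rewrite addn1 | left; rewrite addn0].
Qed.

Lemma final :
  (exists y : nat -> nat -> int,
     [/\ dyoke_geodesic n m y d z dyoke_zero,
         (forall t : nat, (t <= d)%N -> y t i <= 0) &
         (forall j : nat, (j <= m.+1)%N -> j != i ->
            forall a : int, coord_values y d j a <-> coord_values x d j a)]) /\
  (exists y : nat -> nat -> int,
     [/\ dyoke_geodesic n m y d z dyoke_zero,
         (forall t : nat, (t <= d)%N -> 0 <= y t i) &
         (forall j : nat, (j <= m.+1)%N -> j != i ->
            forall a : int, coord_values y d j a <-> coord_values x d j a)]).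
Proof.
have Rdi : R d i = 0.
  have := X i (leqnn d); rewrite xd normc_int //.
have hab : (size Ls + size Rs)%N = d.
  by rewrite /Ls /Rs !size_filter count_predC size_iota.
have hK : (al (size Ls))%:Z * - sg1 + (be (size Rs))%:Z * sg2 = 0.
  by rewrite -W_i W_end.
have al0 : al 0 = 0%N by rewrite /al take0.
have be0 : be 0 = 0%N by rewrite /be take0.
have ma : forall p, (p <= size Ls)%N -> (al p <= al (size Ls))%N.
  by move=> p hp; apply: (monoN al_step); rewrite hp leqnn.
have mb : forall q, (q <= size Rs)%N -> (be q <= be (size Rs))%N.
  by move=> q hq; apply: (monoN be_step); rewrite hq leqnn.
have keq : al (size Ls) = be (size Rs) /\ (sg1 = sg2 \/ al (size Ls) = 0%N).
  by case: sg1v => h1; case: sg2v => h2; rewrite h1 h2 in hK *; lia.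
have [P1 [Q1 [[P10 Q10] st1 [P1N Q1N] b1]]] := schedule al0 be0 al_step be_step keq.1.
have [Q2 [P2 [[Q20 P20] st2 [Q2N P2N] b2]]] := schedule be0 al0 be_step al_step (esym keq.1).
rewrite hab in st1 P1N Q1N b1.
rewrite addnC hab in st2 P2N Q2N b2.
have st2' : forall t, (t < d)%N -> (P2 t.+1 = (P2 t).+1 /\ Q2 t.+1 = Q2 t) \/
                          (P2 t.+1 = P2 t /\ Q2 t.+1 = (Q2 t).+1).
  by move=> t td; case: (st2 t td) => [[? ?]|[? ?]]; [right|left].
have H1 : forall t, (t <= d)%N -> -1 <= W (P1 t) (Q1 t) i <= 1 /\
     (sg1 = 1 -> W (P1 t) (Q1 t) i <= 0) /\ (sg1 = -1 -> 0 <= W (P1 t) (Q1 t) i).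
  move=> t td; rewrite W_i; have [h1 h2 h3] := b1 t td.
  have := ma _ h1; have := mb _ h2; move: keq => [k1 k2].
  by case: sg1v => e1; case: sg2v => e2; rewrite e1 e2; lia.
have H2 : forall t, (t <= d)%N -> -1 <= W (P2 t) (Q2 t) i <= 1 /\
     (sg1 = 1 -> 0 <= W (P2 t) (Q2 t) i) /\ (sg1 = -1 -> W (P2 t) (Q2 t) i <= 0).
  move=> t td; rewrite W_i; have [h1 h2 h3] := b2 t td.
  have := ma _ h2; have := mb _ h1; move: keq => [k1 k2].
  by case: sg1v => e1; case: sg2v => e2; rewrite e1 e2; lia.
have bd1 : forall t, (t <= d)%N -> (P1 t <= size Ls)%N /\ (Q1 t <= size Rs)%N.
  by move=> t td; have [? ? _] := b1 t td.
have bd2 : forall t, (t <= d)%N -> (P2 t <= size Ls)%N /\ (Q2 t <= size Rs)%N.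
  by move=> t td; have [? ? _] := b2 t td.
have [g1 v1] := merge_ok P10 Q10 st1 P1N Q1N bd1 (fun t td => proj1 (H1 t td)).
have [g2 v2] := merge_ok P20 Q20 st2' P2N Q2N bd2 (fun t td => proj1 (H2 t td)).
case: sg1v => e1; split.
- exists (fun t j => normc n m j (W (P1 t) (Q1 t) j)); split => // t td.
  by rewrite normc_int //; apply: (proj1 (proj2 (H1 t td))).
- exists (fun t j => normc n m j (W (P2 t) (Q2 t) j)); split => // t td.
  by rewrite normc_int //; apply: (proj1 (proj2 (H2 t td))).
- exists (fun t j => normc n m j (W (P2 t) (Q2 t) j)); split => // t td.
  by rewrite normc_int //; apply: (proj2 (proj2 (H2 t td))).
- exists (fun t j => normc n m j (W (P1 t) (Q1 t) j)); split => // t td.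
  by rewrite normc_int //; apply: (proj2 (proj2 (H1 t td))).
Qed.

End Merge.

Theorem lemma4p3 (n m : nat) (z : nat -> int) (i : nat)
    (x : nat -> nat -> int) (d : nat) :
  (1 <= n)%N ->
  dyoke_vertex n m z ->
  (1 <= i <= m)%N -> z i = 0 ->
  dyoke_geodesic n m x d z dyoke_zero ->
  (exists y : nat -> nat -> int,
     [/\ dyoke_geodesic n m y d z dyoke_zero,
         (forall t : nat, (t <= d)%N -> y t i <= 0) &
         (forall j : nat, (j <= m.+1)%N -> j != i ->
            forall a : int, coord_values y d j a <-> coord_values x d j a)]) /\
  (exists y : nat -> nat -> int,
     [/\ dyoke_geodesic n m y d z dyoke_zero,
         (forall t : nat, (t <= d)%N -> 0 <= y t i) &
         (forall j : nat, (j <= m.+1)%N -> j != i ->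
            forall a : int, coord_values y d j a <-> coord_values x d j a)]).
Proof.
move=> n1 zv hi zi [xp xg].
have [e [s [ES X]]] := extract xp.
case: (xp) => x0 xd xv xa.
have RV : forall t j, (t <= d)%N -> (1 <= j <= m)%N -> -1 <= raw z e s t j <= 1.
  move=> t j td hj; have := xv t td; case=> _ _ hin _ _.
  have := hin j hj; rewrite X // normc_int // !inE.
  by case/or3P => /eqP ->.
have nobad : forall a b, ~ bad e s d a b.
  move=> a b hb; have [y yp] := shorten n1 zv ES RV hb.
  have ez : (fun j => normc n m j (raw z e s d j)) = dyoke_zero.
    by apply: functional_extensionality => j; rewrite -X // xd.
  rewrite ez in yp; have := xg _ _ yp; case: hb; lia.
have [sg1 [sg1v S1']] := sign_const n1 ES hi nobad i.-1.
have [sg2 [sg2v S2]] := sign_const n1 ES hi nobad i.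
have S1 : forall k, (k < d)%N -> (e k).+1 = i -> s k = sg1.
  by move=> k kd ek; apply: S1' => //; lia.
exact: (final n1 zv ES RV hi X xd xg zi sg1v sg2v S1 S2).
Qed.
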